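(* Let $n,m,k$ be positive integers with $k<m\le kn$. For every single-category instance with $n$ agents, $m$ goods and cardinality constraint $k$, $$\frac{\text{OPT-USW}(I)}{\max_{\mathcal{A}\in \mathcal{C}_k(I)}\text{USW}(\mathcal{A})}\le \frac{1}{2}\left(1+\sqrt{1+\frac{m-1}{k}}\right).$$ Moreover, if $m=k(c^2-1)+1$ for some integer $c\ge 2$, then there exists such an instance (with some number $n$ of agents satisfying $kn\ge m$) for which this ratio equals $\frac{1}{2}\left(1+\sqrt{1+\frac{m-1}{k}}\right)$. Consequently, the utilitarian price of cardinality in the single-category case is $\frac{1}{2}\left(1+\sqrt{1+\frac{m-1}{k}}\right)$ (as an upper bound valid for all instances, attained whenever $m=k(c^2-1)+1$).
   Context: A single-category instance consists of a set $N$ of $n$ agents and a set $M$ of $m$ indivisible goods; each agent $i$ has an additive utility function $u_i:2^M\to\mathbb{R}_{\ge 0}$ with $u_i(\emptyset)=0$ and $u_i(M)=1$ (normalized). An allocation $\mathcal{A}=(A_1,\dots,A_n)$ is a partition of $M$ into $n$ (possibly empty) bundles, agent $i$ receiving $A_i$. Given a positive integer $k$ (the cardinality constraint, with $k\ge m/n$), an allocation is cardinal if $|A_i|\le k$ for all $i$; $\mathcal{C}_k(I)$ denotes the set of cardinal allocations. $\text{USW}(\mathcal{A})=\sum_{i\in N}u_i(A_i)$, and $\text{OPT-USW}(I)$ is the maximum of $\text{USW}$ over all allocations. The utilitarian price of cardinality is the supremum of the ratio $\text{OPT-USW}(I)/\max_{\mathcal{A}\in\mathcal{C}_k(I)}\text{USW}(\mathcal{A})$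 over instances. *)

(* Defs.v *)
From mathcomp Require Import all_boot all_order all_algebra.
From mathcomp Require Import reals.
Set Implicit Arguments. Unset Strict Implicit. Unset Printing Implicit Defensive.
Import Order.TTheory GRing.Theory Num.Theory.
Local Open Scope ring_scope.

Section Defs.
Variable R : realType.

(* A single-category instance with n agents ('I_n) and m goods ('I_m):
   u i g is the value of good g for agent i; u_i(S) = \sum_(g in S) u i g
   (additive). *)
Definition instance_utils (n m : nat) := 'I_n -> 'I_m -> R.

Definition normalized (n m : nat) (u : instance_utils n m) : Prop :=
  (forall i g, 0 <= u i g) /\ (forall i, \sum_(g < m) u i g = 1).

(* An allocation (a partition of M into n possibly empty bundles) is encoded
   by the map sending each good to the agent receiving it; A_i = a^{-1}(i). *)
Definition allocation (n m : nat) := {ffun 'I_m -> 'I_n}.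

Definition bundle (n m : nat) (a : allocation n m) (i : 'I_n) : {set 'I_m} :=
  [set g | a g == i].

Definition util (n m : nat) (u : instance_utils n m) (i : 'I_n) (S : {set 'I_m}) : R :=
  \sum_(g in S) u i g.

Definition USW (n m : nat) (u : instance_utils n m) (a : allocation n m) : R :=
  \sum_(i < n) util u i (bundle a i).

Definition cardinal (n m k : nat) (a : allocation n m) : bool :=
  [forall i, #|bundle a i| <= k]%N.

(* OPT-USW(I): maximum of USW over all allocations (USW >= 0, so 0 is a
   harmless neutral element for max). *)
Definition OPT_USW (n m : nat) (u : instance_utils n m) : R :=
  \big[Num.max/0]_(a : allocation n m) USW u a.

Definition OPT_card_USW (n m k : nat) (u : instance_utils n m) : R :=
  \big[Num.max/0]_(a : allocation n m | cardinal k a) USW u a.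

Definition poc_bound (m k : nat) : R :=
  (1 + Num.sqrt (1 + (m%:R - 1) / k%:R)) / 2.

End Defs.

(* Main.v *)
Require Import Defs.
From mathcomp Require Import all_boot all_order all_algebra.
From mathcomp Require Import reals.
From mathcomp Require Import ring lra zify.
Import Order.TTheory GRing.Theory Num.Theory.
Set Implicit Arguments. Unset Strict Implicit. Unset Printing Implicit Defensive.
Local Open Scope ring_scope.

Lemma usw_swap (R : realType) (n m : nat) (a : allocation n m) (F : 'I_n -> 'I_m -> R) :
  \sum_(i < n) \sum_(g in bundle a i) F i g = \sum_(g < m) F (a g) g.
Proof.
under eq_bigr => i _ do rewrite big_mkcond /=.
rewrite exchange_big /=; apply: eq_bigr => g _.
rewrite (bigD1 (a g)) //= inE eqxx big1 ?addr0 // => i /negbTE.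
by rewrite inE eq_sym => ->.
Qed.

Lemma usw_swap_nat (n m : nat) (a : allocation n m) (F : 'I_n -> 'I_m -> nat) :
  (\sum_(i < n) \sum_(g in bundle a i) F i g = \sum_(g < m) F (a g) g)%N.
Proof.
under eq_bigr => i _ do rewrite big_mkcond /=.
rewrite exchange_big /=; apply: eq_bigr => g _.
rewrite (bigD1 (a g)) //= inE eqxx big1 ?addn0 // => i /negbTE.
by rewrite inE eq_sym => ->.
Qed.

Lemma card_geq_ord (k s : nat) : #|[set c : 'I_k | (s <= c)%N]| = (k - s)%N.
Proof.
rewrite -sum1_card big_mkcond /=.
transitivity (\sum_(0 <= c < k) (if (s <= c)%N then 1 else 0))%N.
  by rewrite big_mkord; apply: eq_bigr => i _; rewrite inE.
elim: k => [|k IH]; first by rewrite big_geq.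
rewrite big_nat_recr //= IH; case: leqP => H; lia.
Qed.

Lemma topk (R : realType) (m k : nat) (w : 'I_m -> R) : forall (A : {set 'I_m}),
  (forall g, g \in A -> 0 <= w g) -> (k <= #|A|)%N ->
  exists K : {set 'I_m}, [/\ K \subset A, #|K| = k &
     k%:R / #|A|%:R * \sum_(g in A) w g <= \sum_(g in K) w g].
Proof.
move=> A; move Hs: #|A| => s; elim: s A Hs => [|s IH] A Hs Hw Hk.
  exists A; split => //; first by rewrite Hs; move: Hk; rewrite leqn0 => /eqP.
  move: Hk; rewrite leqn0 => /eqP ->; rewrite -[(0%:R : R)]/(0 : R) !mul0r; apply: sumr_ge0 => g Hg; exact: Hw.
have HA : (0 < #|A|)%N by rewrite Hs.
have [e0 He0] : exists e0, e0 \in A.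
  by move/card_gt0P: HA => [x Hx]; exists x.
case: (arg_minP w He0) => e He0e Hmin.
have He : e \in A by exact: He0e.
have HsA : #|A :\ e| = s by move: (Hs); rewrite (cardsD1 e) He add1n => -[].
case: (leqP k s) => Hks; last first.
  have -> : k = s.+1 by apply/eqP; rewrite eqn_leq Hk Hks.
  exists A; split => //.
  rewrite divff ?mul1r // pnatr_eq0 //.
have Hw' : forall g, g \in A :\ e -> 0 <= w g.
  by move=> g; rewrite inE => /andP[_]; apply: Hw.
case: (IH (A :\ e) HsA Hw' Hks) => K [HKA HK Hsum].
exists K; split => //.
  by apply: subset_trans HKA _; apply: subsetDl.
apply: le_trans Hsum.
rewrite (big_setD1 e He) /=.
set S' := \sum_(i in A :\ e) w i.
have HS' : s%:R * w e <= S'.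
  rewrite -[s]HsA -sum1_card natr_sum big_distrl /= mul1r.
  by apply: ler_sum => g; rewrite inE => /andP[_ Hg]; apply: Hmin.
case: (posnP k) => [-> | Hk0]; first by rewrite -[(0%:R : R)]/(0 : R) !mul0r.
have Hs0 : (0 < s)%N by apply: leq_trans Hks.
have Hs0R : (0:R) < s%:R by rewrite ltr0n.
have E : forall x y : R, k%:R / x * y = k%:R * (y / x).
  by move=> x y; rewrite mulrAC -mulrA.
rewrite !E; apply: ler_wpM2l => //.
rewrite ler_pdivrMr ?ltr0n // mulrAC ler_pdivlMr // -natr1.
nra.
Qed.

Lemma rot_sum (R : realType) (N a : nat) (h : nat -> R) : (0 < N)%N ->
  \sum_(r < N) h ((a + r) %% N)%N = \sum_(r < N) h r.
Proof.
move=> HN.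
pose f := fun r : 'I_N => Ordinal (ltn_pmod (a + r)%N HN).
have finj : injective f.
  move=> r1 r2 /(congr1 val) /= /eqP; rewrite eqn_modDl !modn_small //.
  by move/eqP => H; apply: val_inj.
by rewrite [RHS](reindex_inj finj).
Qed.

Lemma avg_inj (R : realType) (m : nat) (T : finType) (t0 : T) (V : {set T})
  (F : {set 'I_m}) (phi : 'I_m -> T -> R) :
  (#|F| <= #|V|)%N ->
  exists sigma : 'I_m -> T, [/\ {in F &, injective sigma},
    (forall g, g \in F -> sigma g \in V) &
    (\sum_(g in F) \sum_(x in V) phi g x) / #|V|%:R <= \sum_(g in F) phi g (sigma g)].
Proof.
move=> HFV; case HN: #|V| => [|N'].
  have F0 : F = set0 by apply/eqP; rewrite -cards_eq0 -leqn0 -HN.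
  exists (fun _ => t0); split.
  - by move=> x; rewrite F0 inE.
  - by move=> g; rewrite F0 inE.
  - by rewrite F0 !big_set0 mul0r.
set N := N'.+1.
have HN0 : (0 < N)%N by [].
pose sig (r : 'I_N) (g : 'I_m) := nth t0 (enum V) ((index g (enum F) + r) %% N)%N.
pose X (r : 'I_N) := \sum_(g in F) phi g (sig r g).
have HsV : size (enum V) = N by rewrite -cardE HN.
have Htot : \sum_(r < N) X r = \sum_(g in F) \sum_(x in V) phi g x.
  rewrite exchange_big /=; apply: eq_bigr => g _.
  rewrite (@rot_sum R N _ (fun p => phi g (nth t0 (enum V) p))) //.
  rewrite -(big_enum _ _ V) (big_nth t0) HsV big_mkord //.
case: (@arg_maxP _ _ _ (ord0 : 'I_N) xpredT X isT) => r0 _ Hmax.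
exists (sig r0); split.
- move=> g1 g2 Hg1 Hg2; rewrite /sig => /eqP.
  have HFN : (#|F| <= N)%N by move: HFV; rewrite HN.
  have Hi1 : (index g1 (enum F) < #|F|)%N by rewrite cardE index_mem mem_enum.
  have Hi2 : (index g2 (enum F) < #|F|)%N by rewrite cardE index_mem mem_enum.
  rewrite nth_uniq ?HsV ?ltn_pmod ?enum_uniq // eqn_modDr !modn_small;
    try exact: (leq_trans Hi1 HFN); try exact: (leq_trans Hi2 HFN).
  by move/eqP; apply: (index_inj g1); rewrite mem_enum.
- move=> g Hg; rewrite /sig -mem_enum; apply: mem_nth; by rewrite HsV ltn_pmod.
- rewrite -Htot ler_pdivrMr ?ltr0n //.
  apply: le_trans (_ : \sum_(r < N) X r0 <= _).
    by apply: ler_sum => r _; apply: Hmax.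
  by rewrite sumr_const card_ord mulr_natr.
Qed.

Lemma key_ineq (R : realType) (n : nat) (P : pred 'I_n) (x d s : 'I_n -> R)
  (W B kk m1 : R) :
  0 < kk -> 1 <= B -> 4 * kk * B * (B - 1) = m1 ->
  (forall i, P i -> [/\ 0 <= d i, d i <= x i & 0 < s i]) ->
  1 <= W + \sum_(i | P i) d i ->
  \sum_(i | P i) (x i - d i) * s i <= m1 ->
  W + \sum_(i | P i) x i <= B * (W + \sum_(i | P i) (d i + kk * (x i - d i) / s i)).
Proof.
move=> Hkk HB HBm Hi HWd Hes.
have HB0 : 0 < B by apply: lt_le_trans HB.
have per : forall i, P i ->
    (x i - d i) - B * (kk * (x i - d i) / s i) <= (x i - d i) * s i / (4 * kk * B).
  move=> i Pi; have [Hd Hdx Hs] := Hi i Pi.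
  rewrite -subr_ge0.
  have -> : (x i - d i) * s i / (4 * kk * B) - ((x i - d i) - B * (kk * (x i - d i) / s i))
     = (x i - d i) * (s i - 2 * B * kk) ^+ 2 / (4 * kk * B * s i).
    by field; rewrite ?mulf_neq0 ?gt_eqF.
  apply: divr_ge0; last by rewrite !mulr_ge0 // ?ltW.
  by apply: mulr_ge0; [rewrite subr_ge0 | apply: sqr_ge0].
have HE : \sum_(i | P i) ((x i - d i) - B * (kk * (x i - d i) / s i)) <= B - 1.
  apply: le_trans (ler_sum _ per) _.
  rewrite -mulr_suml ler_pdivrMr; last by rewrite !mulr_gt0.
  by apply: le_trans Hes _; rewrite -HBm mulrC.
rewrite sumrB -mulr_sumr in HE.
rewrite big_split /=.
have Hx : \sum_(i | P i) x i = \sum_(i | P i) d i + \sum_(i | P i) (x i - d i).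
  by rewrite -big_split /=; apply: eq_bigr => i _; rewrite addrC subrK.
rewrite Hx; nra.
Qed.

Lemma USW_E (R : realType) (n m : nat) (u : instance_utils R n m) (a : allocation n m) :
  USW u a = \sum_(g < m) u (a g) g.
Proof. by rewrite /USW /util usw_swap. Qed.

Lemma OPT_le (R : realType) (n m : nat) (u : instance_utils R n m) (X : R) :
  (forall a, USW u a <= X) -> 0 <= X -> OPT_USW u <= X.
Proof. by move=> H H0; rewrite /OPT_USW; apply: bigmax_le. Qed.

Lemma le_OPT_card (R : realType) (n m k : nat) (u : instance_utils R n m) a :
  cardinal k a -> USW u a <= OPT_card_USW k u.
Proof. by move=> H; rewrite /OPT_card_USW; apply: (le_bigmax_cond _ _ H). Qed.

Lemma OPT_card_ge0 (R : realType) (n m k : nat) (u : instance_utils R n m) :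
  0 <= OPT_card_USW k u.
Proof. exact: bigmax_ge_id. Qed.

Lemma le_OPT (R : realType) (n m : nat) (u : instance_utils R n m) a :
  USW u a <= OPT_USW u.
Proof. exact: le_bigmax. Qed.

Lemma poc_props (R : realType) (m k : nat) : (0 < k)%N -> (0 < m)%N ->
  1 <= poc_bound R m k /\
  4 * k%:R * poc_bound R m k * (poc_bound R m k - 1) = m%:R - 1.
Proof.
move=> Hk Hm; rewrite /poc_bound.
set q := (1 + (m%:R - 1) / k%:R).
have Hq : 1 <= q.
  by rewrite /q lerDl; apply: divr_ge0 => //; rewrite subr_ge0 ler1n.
have Hs : 1 <= Num.sqrt q by rewrite -sqrtr1 ler_sqrt // (le_trans ler01).
have Hs2 : Num.sqrt q ^+ 2 = q by rewrite sqr_sqrtr // (le_trans ler01).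
split; first lra.
have Hk0 : k%:R != 0 :> R by rewrite pnatr_eq0 -lt0n.
have -> : 4 * k%:R * ((1 + Num.sqrt q) / 2) * ((1 + Num.sqrt q) / 2 - 1)
   = k%:R * (Num.sqrt q ^+ 2 - 1) by field.
by rewrite Hs2 /q addrAC subrr add0r mulrC divfK.
Qed.

Lemma part1 (R : realType) (n m k : nat) :
  (0 < n)%N -> (0 < m)%N -> (0 < k)%N -> (k < m)%N -> (m <= k * n)%N ->
  forall u : instance_utils R n m, normalized u ->
  OPT_USW u / OPT_card_USW k u <= poc_bound R m k.
Proof.
move=> Hn Hm Hk Hkm Hmkn u [Hu0 Hu1].
have [HB1 HBm] := poc_props R Hk Hm.
set B := poc_bound R m k in HB1 HBm *.
suff Hmain : OPT_USW u <= B * OPT_card_USW k u.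
  have := OPT_card_ge0 k u; rewrite le_eqVlt => /orP[/eqP <-|Hc].
    by rewrite invr0 mulr0 (le_trans ler01).
  by rewrite ler_pdivrMr // mulrC.
pose i0 : 'I_n := Ordinal Hn.
pose O g := [arg max_(i > i0) u i g]%O.
have HO : forall i g, u i g <= u (O g) g.
  by move=> i g; rewrite /O; case: arg_maxP => // j _ Hj; exact: Hj.
pose Oa : allocation n m := [ffun g => O g].
pose v g := u (O g) g.
have Hv0 : forall g, 0 <= v g by move=> g; apply: Hu0.
have HOPT : OPT_USW u <= \sum_g v g.
  apply: OPT_le; last by apply: sumr_ge0.
  by move=> a; rewrite USW_E; apply: ler_sum => g _; apply: HO.
pose A i := bundle Oa i.
have HAi : forall i g, (g \in A i) = (O g == i) by move=> i g; rewrite /A /bundle inE ffunE.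
pose s i := #|A i|.
pose big i := (k < s i)%N.
have Hpart : forall f : 'I_m -> R, \sum_g f g = \sum_i \sum_(g in A i) f g.
  move=> f; rewrite (usw_swap Oa (fun _ g => f g)) //.
have HBX : forall X, 0 <= X -> X <= B * X by move=> X HX; rewrite ler_peMl.
case: (boolP [exists i, big i]) => Hbig; last first.
  have Hc : cardinal k Oa.
    apply/forallP => i; move/existsPn: Hbig => /(_ i).
    by rewrite /big -leqNgt.
  apply: le_trans HOPT _; apply: le_trans (HBX _ (OPT_card_ge0 k u)).
  apply: le_trans (le_OPT_card u Hc).
  by rewrite USW_E; apply: ler_sum => g _; rewrite ffunE.
pose V : {set 'I_n * 'I_k} := [set x : 'I_n * 'I_k | ~~ big x.1 && (s x.1 <= x.2)%N].
pose S := #|V|.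
pose dl g := (\sum_(x in V) u x.1 g) / S%:R.
have Hdl0 : forall g, 0 <= dl g.
  by move=> g; apply: divr_ge0 => //; apply: sumr_ge0 => x _; apply: Hu0.
have Hdlv : forall g, dl g <= v g.
  move=> g; rewrite /dl; case: (posnP S) => HS.
    by rewrite HS invr0 mulr0.
  rewrite ler_pdivrMr ?ltr0n //.
  apply: le_trans (_ : \sum_(x in V) v g <= _); first by apply: ler_sum => x _; apply: HO.
  by rewrite sumr_const mulr_natr.
have HK : forall i, exists K : {set 'I_m}, big i ->
   [/\ K \subset A i, #|K| = k &
     k%:R / (s i)%:R * \sum_(g in A i) (v g - dl g) <= \sum_(g in K) (v g - dl g)].
  move=> i; case: (boolP (big i)) => Hi; last by exists set0.
  have Hw : forall g, g \in A i -> 0 <= v g - dl g by move=> g _; rewrite subr_ge0.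
  have [K HK] := @topk R m k (fun g => v g - dl g) (A i) Hw (ltnW Hi).
  by exists K.
have [Kf HKf] := fin_all_exists HK.
pose F := [set g | big (O g) && (g \notin Kf (O g))].
have HAO : forall i g, g \in A i -> O g = i by move=> i g; rewrite HAi => /eqP.
have Hsum_s : (\sum_i s i)%N = m.
  transitivity (\sum_i \sum_(g in A i) 1)%N.
    by apply: eq_bigr => i _; rewrite sum1_card.
  by rewrite usw_swap_nat sum1_card card_ord.
have HcardF : #|F| = (\sum_i (if big i then s i - k else 0))%N.
  rewrite -sum1_card big_mkcond /=.
  rewrite -(usw_swap_nat Oa (fun _ g => if g \in F then 1 else 0)%N).
  apply: eq_bigr => i _.
  case: (boolP (big i)) => Hi.
  - have [HKA HKc _] := HKf i Hi.
    rewrite -big_mkcondr /= sum1_card.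
    rewrite -HKc -(setIidPr HKA) -cardsD; apply: eq_card => g.
    rewrite -topredE /= !inE ffunE.
    by case: eqP => [->|]; rewrite ?Hi ?andbF //= andbT.
  - apply: big1 => g Hg; rewrite inE (HAO _ _ Hg) (negbTE Hi) //.
have HcardV : S = (\sum_i (if big i then 0 else k - s i))%N.
  rewrite /S -sum1_card big_mkcond /=.
  transitivity (\sum_p (if (p.1, p.2) \in V then 1 else 0))%N.
    by apply: eq_bigr => -[i c].
  rewrite -(pair_bigA _ (fun i c => if (i, c) \in V then 1 else 0)%N).
  apply: eq_bigr => i _.
  case: (boolP (big i)) => Hi.
  - by apply: big1 => c _; rewrite inE /= Hi.
  - rewrite -card_geq_ord -sum1_card [RHS]big_mkcond /=.
    by apply: eq_bigr => c _; rewrite !inE /= Hi.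
have HFV : (#|F| <= S)%N.
  rewrite HcardF HcardV.
  have E : (\sum_i ((if big i then s i - k else 0) + k))%N =
           (\sum_i (s i + (if big i then 0 else k - s i)))%N.
    apply: eq_bigr => i _; case: (boolP (big i)); rewrite /big => Hi; lia.
  rewrite !big_split /= Hsum_s sum_nat_const card_ord in E.
  by rewrite -(leq_add2r (n * k)) E addnC leq_add2l mulnC.
have HS0 : (0 < S)%N.
  move/existsP: Hbig => [i Hi]; apply: leq_trans HFV; rewrite HcardF (bigD1 i) //= Hi.
  rewrite /big in Hi; lia.
pose t0 : 'I_n * 'I_k := (i0, Ordinal Hk).
have [sig [Hinj Hmem Havg]] := avg_inj t0 (fun g x => u x.1 g) HFV.
pose a : allocation n m := [ffun g => if g \in F then (sig g).1 else O g].
have HmemV : forall g, g \in F -> ~~ big (sig g).1 /\ (s (sig g).1 <= (sig g).2)%N.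
  by move=> g Hg; move: (Hmem g Hg); rewrite inE => /andP.
have Hca : cardinal k a.
  apply/forallP => i.
  case: (boolP (big i)) => Hi.
  - have [HKA HKc _] := HKf i Hi.
    rewrite -HKc; apply: subset_leq_card; apply/subsetP => g.
    rewrite /bundle inE ffunE; case: ifP => HgF.
      by move/eqP => Hs; have [] := HmemV g HgF; rewrite Hs Hi.
    move/eqP => HOg; move: HgF; rewrite inE HOg Hi /=.
    by move/negbT; rewrite negbK.
  - pose G := [set g in F | (sig g).1 == i].
    have Hsub : bundle a i \subset A i :|: G.
      apply/subsetP => g; rewrite /bundle inE ffunE in_setU HAi [g \in G]in_set.
      by case: ifP => HgF /eqP <-; rewrite ?eqxx /= ?orbT // HgF orbT.
    apply: leq_trans (subset_leq_card Hsub) _.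
    rewrite cardsU; apply: leq_trans (leq_subr _ _) _.
    have HG : (#|G| <= k - s i)%N.
      rewrite -card_geq_ord -(@card_in_imset _ _ (fun g => (sig g).2) G).
        apply: subset_leq_card; apply/subsetP => c /imsetP [g Hg ->].
        move: Hg; rewrite [g \in G]in_set => /andP [HgF /eqP Hgi].
        by have [_] := HmemV g HgF; rewrite Hgi inE.
      move=> g1 g2; rewrite [g1 \in G]in_set [g2 \in G]in_set => /andP [Hg1 /eqP H1] /andP [Hg2 /eqP H2] H12.
      apply: Hinj => //; rewrite [sig g1]surjective_pairing [sig g2]surjective_pairing.
      by rewrite H1 H2 H12.
    rewrite /big -leqNgt in Hi.
    by change (s i + #|G| <= k)%N; lia.
have Hval : \sum_g (if g \in F then dl g else v g) <= USW u a.
  rewrite USW_E (bigID (fun g => g \in F)) [X in _ <= X](bigID (fun g => g \in F)) /=.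
  apply: lerD.
    have -> : \sum_(g in F) (if g \in F then dl g else v g) = \sum_(g in F) dl g.
      by apply: eq_bigr => g ->.
    have -> : \sum_(g in F) u (a g) g = \sum_(g in F) u (sig g).1 g.
      by apply: eq_bigr => g Hg; rewrite ffunE Hg.
    by rewrite /dl -mulr_suml.
  - by apply: ler_sum => g /negbTE Hg; rewrite ffunE Hg.
pose x i := \sum_(g in A i) v g.
pose d i := \sum_(g in A i) dl g.
pose sR i := (s i)%:R : R.
pose W := \sum_(i | ~~ big i) x i.
have Hcard_lb : W + \sum_(i | big i) (d i + k%:R * (x i - d i) / sR i) <= OPT_card_USW k u.
  apply: le_trans (le_trans Hval (le_OPT_card u Hca)).
  rewrite [X in _ <= X]Hpart [X in _ <= X](bigID big) /= addrC.
  apply: lerD.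
  - apply: ler_sum => i Hi; apply: ler_sum => g Hg.
    by rewrite inE (HAO _ _ Hg) (negbTE Hi).
  - apply: ler_sum => i Hi; have [HKA HKc Htop] := HKf i Hi.
    have -> : \sum_(g in A i) (if g \in F then dl g else v g) =
              d i + \sum_(g in Kf i) (v g - dl g).
      have -> : \sum_(g in Kf i) (v g - dl g) =
                \sum_(g in A i) (if g \in Kf i then v g - dl g else 0).
        rewrite -big_mkcondr; apply: eq_bigl => g.
        case Hg: (g \in Kf i); rewrite ?andbT ?andbF //.
        by rewrite (subsetP HKA).
      rewrite /d -big_split /=; apply: eq_bigr => g Hg.
      rewrite inE (HAO _ _ Hg) Hi /=.
      by case: (g \in Kf i) => /=; rewrite ?addr0 // addrC subrK.
    rewrite lerD2l; apply: le_trans Htop.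
    by rewrite /x /d -sumrB mulrAC.
have HOPT2 : OPT_USW u <= W + \sum_(i | big i) x i.
  by apply: (le_trans HOPT); rewrite Hpart (bigID big) addrC.
have Hd1 : \sum_i d i = 1.
  rewrite /d -Hpart /dl -mulr_suml exchange_big /=.
  under eq_bigr => y _ do rewrite Hu1.
  by rewrite sumr_const divff // pnatr_eq0 -lt0n.
have Hx1 : forall i, x i <= 1.
  move=> i; rewrite -(Hu1 i) (bigID (mem (A i))) /=.
  apply: le_trans (_ : _ <= \sum_(g in A i) u i g) _.
    by apply: ler_sum => g Hg; rewrite /v (HAO _ _ Hg).
  by rewrite lerDl; apply: sumr_ge0 => g _; apply: Hu0.
have Hdx : forall i, d i <= x i by move=> i; apply: ler_sum => g _; apply: Hdlv.
have Hd0 : forall i, 0 <= d i by move=> i; apply: sumr_ge0 => g _; apply: Hdl0.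
have HsR : \sum_i sR i = m%:R by rewrite /sR -natr_sum Hsum_s.
have HsR0 : forall i, 0 <= sR i by move=> i; rewrite /sR ler0n.
have HsR1 : forall i, big i -> 1 <= sR i.
  by move=> i Hi; rewrite /sR ler1n; apply: leq_ltn_trans Hi.
have Hes : \sum_(i | big i) (x i - d i) * sR i <= \sum_(i | big i) sR i - \sum_(i | big i) d i.
  rewrite -sumrB; apply: ler_sum => i Hi.
  have := Hx1 i; have := Hd0 i; have := HsR1 i Hi; nra.
have HsRsplit : \sum_i sR i = \sum_(i | big i) sR i + \sum_(i | ~~ big i) sR i.
  by rewrite (bigID big).
have Hdsplit : \sum_i d i = \sum_(i | big i) d i + \sum_(i | ~~ big i) d i.
  by rewrite (bigID big).
have HdW : \sum_(i | ~~ big i) d i <= W by apply: ler_sum => i _; apply: Hdx.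
have HsRnb0 : 0 <= \sum_(i | ~~ big i) sR i by apply: sumr_ge0.
have Hdb0 : 0 <= \sum_(i | big i) d i by apply: sumr_ge0.
have HW0 : 0 <= W by apply: sumr_ge0 => i _; apply: sumr_ge0.
have Hm1 : \sum_(i | big i) (x i - d i) * sR i <= m%:R - 1.
  case: (boolP [exists g, ~~ big (O g)]) => Hex.
  - move/existsP: Hex => [g Hg].
    have Hj : 1 <= sR (O g).
      rewrite /sR ler1n /s card_gt0; apply/set0Pn; exists g; by rewrite HAi.
    have : sR (O g) <= \sum_(i | ~~ big i) sR i.
      rewrite (bigD1 (O g)) //= lerDl; apply: sumr_ge0 => i _; apply: HsR0.
    lra.
  - have HW : W = 0.
      apply: big1 => i Hi; apply: big1 => g Hg.
      move/existsPn: Hex => /(_ g); rewrite (HAO _ _ Hg) Hi //.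
    lra.
apply: le_trans HOPT2 _.
apply: le_trans (_ : _ <= B * (W + \sum_(i | big i) (d i + k%:R * (x i - d i) / sR i))) _.
  apply: key_ineq => //.
  - by rewrite ltr0n.
  - move=> i Hi; split => //; rewrite /sR ltr0n; exact: leq_ltn_trans Hi.
  - lra.
  - by rewrite HBm.
by apply: ler_wpM2l => //; apply: le_trans HB1.
Qed.

Lemma sum_split (R : realType) (t s : nat) (F : nat -> R) :
  \sum_(0 <= g < t * s) F g = \sum_(0 <= i < t) \sum_(0 <= r < s) F (i * s + r)%N.
Proof.
elim: t => [|t IH]; first by rewrite mul0n !big_geq.
rewrite big_nat_recr //= -IH mulSnr (big_cat_nat (leq0n (t * s)) (leq_addr s _)) /=.
congr (_ + _).
rewrite -{1}[(t * s)%N]add0n big_addn addKn.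
by apply: eq_bigr => r _; rewrite addnC.
Qed.

Lemma sum_if_lt (R : realType) (n t : nat) (a : R) :
  \sum_(i < n) (if (i < t)%N then a else 0) = a *+ minn t n.
Proof.
rewrite -(big_mkord xpredT (fun i => if (i < t)%N then a else 0)).
elim: n => [|n IH]; first by rewrite big_geq // minn0.
rewrite big_nat_recr //= IH.
case: (ltnP n t) => H.
  have -> : minn t n.+1 = n.+1 by lia.
  by rewrite mulrSr.
have -> : minn t n.+1 = t by lia.
by rewrite addr0.
Qed.


Lemma card_lt_ord (n k : nat) : (#|[set c : 'I_n | (c < k)%N]| <= k)%N.
Proof.
have H : (#|[set c : 'I_n | (c < k)%N]| = minn k n)%N.
  rewrite -sum1_card big_mkcond /=.
  transitivity (\sum_(0 <= c < n) (if (c < k)%N then 1 else 0))%N.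
    by rewrite big_mkord; apply: eq_bigr => i _; rewrite inE.
  elim: n => [|n IH]; first by rewrite big_geq // minn0.
  rewrite big_nat_recr //= IH; case: ltnP => H; lia.
by rewrite H geq_minl.
Qed.

Lemma part2_inst (R : realType) (k t : nat) : (0 < k)%N -> (0 < t)%N ->
  exists n : nat, (0 < n)%N /\ ((t * (k * t.+2)).+1 <= k * n)%N /\
   exists u : instance_utils R n (t * (k * t.+2)).+1, normalized u /\
     OPT_USW u = t.+1%:R /\ OPT_card_USW k u = 1 + t%:R / t.+2%:R.
Proof.
move=> Hk Ht.
set s := (k * t.+2)%N.
set N := ((t * s).+1 + (t * s).+1)%N.
have Hs0 : (0 < s)%N by rewrite /s muln_gt0 Hk.
have HsR : s%:R != 0 :> R by rewrite pnatr_eq0 -lt0n.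
exists N.+1; split => //; split.
  rewrite /N; nia.
pose uu (i : 'I_N.+1) (g : nat) : R :=
  if (i < t)%N then (if (g %/ s == i)%N then s%:R^-1 else 0)
  else (if g == (t * s)%N then 1 else 0).
pose u : instance_utils R N.+1 (t * s).+1 := fun i g => uu i g.
exists u.
have Hsum : forall h : nat -> R,
    \sum_(g < (t * s).+1) h g = \sum_(0 <= g < t * s) h g + h (t * s)%N.
  by move=> h; rewrite -big_nat_recr // big_mkord.
have Hdiv : forall i r, (r < s)%N -> ((i * s + r) %/ s)%N = i.
  by move=> i r Hr; rewrite divnMDl // divn_small // addn0.
have Hmod : forall i r, (r < s)%N -> ((i * s + r) %% s)%N = r.
  by move=> i r Hr; rewrite modnMDl modn_small.
have Hts : ((t * s) %/ s)%N = t by rewrite mulnK.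
have Hsinv : (s%:R)^-1 *+ s = 1 :> R by rewrite -[LHS]mulr_natl mulfV.
have Hu0 : forall i g, 0 <= u i g.
  by move=> i g; rewrite /u /uu; repeat case: ifP => _; rewrite ?invr_ge0 ?ler0n.
split; first split => //.
  move=> i; rewrite /u (Hsum (uu i)) /uu.
  case Hit: (i < t)%N.
  - rewrite Hts (_ : (t == i) = false); last by apply/negbTE; rewrite neq_ltn Hit orbT.
    rewrite addr0 sum_split.
    transitivity (\sum_(0 <= j < t) (if j == i then 1 else 0) : R).
      apply: eq_big_nat => j _.
      transitivity (\sum_(0 <= r < s) (if j == i then s%:R^-1 else 0) : R).
        by apply: eq_big_nat => r /andP [_ Hr]; rewrite Hdiv.
      by rewrite sumr_const_nat subn0; case: (j == i); rewrite ?mul0rn.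
    rewrite big_mkord (bigD1 (Ordinal Hit)) //= eqxx big1 ?addr0 // => j Hj.
    by rewrite (_ : (j == i :> nat) = false) //; apply/negbTE; move: Hj; apply: contra => /eqP H; apply/eqP/val_inj.
  - rewrite eqxx big1_seq ?add0r // => g /andP [_]; rewrite mem_index_iota => /andP [_ Hg].
    by rewrite (_ : (g == t * s)%N = false) //; apply/negbTE; rewrite neq_ltn Hg.
have Hsle1 : s%:R^-1 <= 1 :> R by rewrite invf_le1 ?ler1n ?ltr0n.
have Hsi0 : 0 <= s%:R^-1 :> R by rewrite invr_ge0 ler0n.
have Hconst : \sum_(0 <= g < t * s) s%:R^-1 = t%:R :> R.
  by rewrite sumr_const_nat subn0 mulnC mulrnA Hsinv.
pose hO (g : nat) : R := if (g < t * s)%N then s%:R^-1 else 1.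
have HhO : \sum_(g < (t * s).+1) hO g = t.+1%:R.
  rewrite (Hsum hO) /hO ltnn -natr1 -Hconst; congr (_ + _).
  by apply: eq_big_nat => g /andP [_ ->].
have HOPT : OPT_USW u = t.+1%:R.
  apply/le_anti/andP; split.
  - apply: OPT_le => [a|]; last by rewrite ler0n.
    rewrite USW_E -HhO; apply: ler_sum => g _.
    rewrite /u /uu /hO; case: (ltnP g (t * s)) => Hg.
      rewrite (_ : (g == t * s :> nat) = false); last by apply/negbTE; rewrite neq_ltn Hg.
      by repeat case: ifP => _.
    by repeat case: ifP => _.
  - pose Oa : allocation N.+1 (t * s).+1 :=
      [ffun g : 'I_(t * s).+1 => if (g < t * s)%N then inord (g %/ s) else inord t].
    apply: le_trans (le_OPT u Oa); rewrite USW_E -HhO le_eqVlt; apply/orP; left.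
    apply/eqP; apply: eq_bigr => g _; rewrite /u /uu /hO ffunE.
    case: ifP => Hg.
      have Hgt : (g %/ s < t)%N by rewrite ltn_divLR.
      rewrite inordK ?Hgt ?eqxx //; apply: (ltn_trans Hgt); rewrite /N; nia.
    rewrite inordK ?ltnn; last by rewrite /N; nia.
    have -> : (g == t * s :> nat) by rewrite eqn_leq -ltnS ltn_ord leqNgt Hg.
    by [].
have Hkey : s%:R^-1 *+ k *+ t = t%:R / t.+2%:R :> R.
  have Hk0 : k%:R != 0 :> R by rewrite pnatr_eq0 -lt0n.
  have Ht2 : t.+2%:R != 0 :> R by rewrite pnatr_eq0.
  rewrite -mulrnA -[LHS]mulr_natr /s !natrM.
  by field; rewrite Hk0 andbT -natrD pnatr_eq0.

have Hlast : \sum_(g < (t * s).+1) (if (g == t * s :> nat) then 1 else 0) = 1 :> R.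
  rewrite (Hsum (fun g => if g == (t * s)%N then 1 else 0)) /= eqxx.
  rewrite big1_seq ?add0r // => g /andP [_]; rewrite mem_index_iota => /andP [_ Hg].
  by rewrite (_ : (g == t * s)%N = false) //; apply/negbTE; rewrite neq_ltn Hg.
split; first exact: HOPT.
apply/le_anti/andP; split.
- rewrite /OPT_card_USW; apply: bigmax_le => [|a Ha].
    by apply: addr_ge0 => //; apply: divr_ge0; rewrite ler0n.
  rewrite USW_E.
  apply: le_trans (_ : \sum_g ((if (a g < t)%N then s%:R^-1 else 0)
                        + (if (g == t * s :> nat) then 1 else 0)) <= _).
    apply: ler_sum => g _; rewrite /u /uu.
    case: (a g < t)%N; case: ((g %/ s)%N == a g); case: (g == t * s :> nat); rewrite /= ?addr0 ?add0r; lra.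
  rewrite big_split /= Hlast addrC lerD2l.
  rewrite -(usw_swap a (fun i _ => if (i < t)%N then s%:R^-1 else 0)).
  apply: le_trans (_ : \sum_(i < N.+1) (if (i < t)%N then s%:R^-1 *+ k else 0) <= _).
    apply: ler_sum => i _; case: ifP => _; last by rewrite big1.
    rewrite sumr_const; apply: ler_wpMn2l => //.
    by move/forallP: Ha => /(_ i).
  rewrite sum_if_lt (_ : minn t N.+1 = t) ?Hkey //.
  apply/minn_idPl; apply: leq_trans (leq_pmulr t Hs0) _; rewrite /N; lia.
- pose a : allocation N.+1 (t * s).+1 :=
    [ffun g : 'I_(t * s).+1 => if (g < t * s)%N && (g %% s < k)%N
                               then inord (g %/ s) else inord (t + g)].
  have HtN : (t < N.+1)%N by apply: leq_ltn_trans (leq_pmulr t Hs0) _; rewrite /N; lia.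
  have Hv1 : forall g : 'I_(t * s).+1, (g < t * s)%N -> (g %/ s < N.+1)%N.
    move=> g Hg; apply: ltn_trans HtN; by rewrite ltn_divLR.
  have Hv2 : forall g : 'I_(t * s).+1, (t + g < N.+1)%N.
    move=> g; have := ltn_ord g; rewrite /N => Hg.
    apply: leq_ltn_trans (_ : (t + g <= t * s + t * s)%N) _; last by lia.
    by apply: leq_add; [apply: leq_pmulr | rewrite -ltnS].
  have Ha1 : forall g, (a g < t)%N -> [/\ (g < t * s)%N, (g %% s < k)%N & (a g = (g %/ s)%N :> nat)].
    move=> g; rewrite ffunE; case: ifP => [/andP [H1 H2]|_].
      by rewrite inordK ?Hv1.
    by rewrite inordK ?Hv2 // ltnNge leq_addr.
  have Hca : cardinal k a.
    apply/forallP => i; case: (ltnP i t) => Hi.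
    + have Hmodlt : forall g : 'I_(t * s).+1, (g %% s < (t * s).+1)%N.
        by move=> g; apply: leq_ltn_trans (leq_mod _ _) (ltn_ord g).
      pose f := fun g : 'I_(t * s).+1 => (inord (g %% s) : 'I_(t * s).+1).
      have Hfinj : {in bundle a i &, injective f}.
        move=> g1 g2; rewrite !inE => /eqP H1 /eqP H2 /(congr1 (@nat_of_ord _)).
        have := Ha1 g1; rewrite H1 => /(_ Hi) [A1 B1 C1].
        have := Ha1 g2; rewrite H2 => /(_ Hi) [A2 B2 C2].
        rewrite /f !inordK ?Hmodlt //.
        move=> Hm; apply: val_inj => /=.
        by rewrite (divn_eq g1 s) (divn_eq g2 s) -C1 -C2 Hm.
      rewrite -(card_in_imset Hfinj).
      apply: leq_trans (card_lt_ord (t * s).+1 k).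
      apply: subset_leq_card; apply/subsetP => c /imsetP [g Hg0 ->].
      have Hg : a g = i by move: Hg0; rewrite /bundle inE => /eqP.
      have := Ha1 g; rewrite Hg => /(_ Hi) [A1 B1 C1].
      by rewrite inE /f inordK ?Hmodlt.
    + have Hsub : bundle a i \subset [set (inord (i - t) : 'I_(t * s).+1)].
        apply/subsetP => g; rewrite !inE => /eqP Hg.
        have Hnot : ~~ (a g < t)%N by rewrite Hg -leqNgt.
        move: Hg Hnot; rewrite ffunE; case: ifP => H.
          case/andP: H => H' _.
          by move=> _; rewrite inordK ?Hv1 // ltn_divLR // H'.
        move=> Hg _; apply/eqP/val_inj => /=.
        have : (t + g)%N = i by rewrite -Hg inordK.
        move=> Hti; rewrite inordK; first lia.
        by have := ltn_ord g; lia.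
      apply: leq_trans (subset_leq_card Hsub) _; by rewrite cards1.
  apply: le_trans (le_OPT_card u Hca).
  pose hC (g : nat) : R := if (g < t * s)%N && (g %% s < k)%N then s%:R^-1
                           else (if g == (t * s)%N then 1 else 0).
  have HuC : forall g : 'I_(t * s).+1, u (a g) g = hC g.
    move=> g; rewrite /u /uu /hC ffunE.
    case Hc: ((g < t * s) && (g %% s < k))%N.
      case/andP: Hc => Hc _.
      by rewrite inordK ?Hv1 // ltn_divLR // Hc eqxx.
    by rewrite inordK ?Hv2 // ltnNge leq_addr.
  rewrite USW_E; under eq_bigr => g _ do rewrite HuC.
  rewrite (Hsum hC) (_ : hC (t * s)%N = 1); last by rewrite /hC ltnn eqxx.
  rewrite [X in _ <= X]addrC lerD2l.
  have Hks : (k <= s)%N by rewrite /s leq_pmulr.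
  rewrite le_eqVlt; apply/orP; left; apply/eqP; symmetry.
  transitivity (\sum_(0 <= g < t * s) (if (g %% s < k)%N then s%:R^-1 else 0) : R).
    apply: eq_big_nat => g /andP [_ Hg]; rewrite /hC Hg /=.
    by case: ifP => // _; rewrite (_ : (g == t * s)%N = false) //; apply/negbTE; rewrite neq_ltn Hg.
  rewrite sum_split -Hkey.
  transitivity (\sum_(0 <= i < t) s%:R^-1 *+ k : R); last by rewrite sumr_const_nat subn0.
  apply: eq_big_nat => i _.
  transitivity (\sum_(0 <= r < s) (if (r < k)%N then s%:R^-1 else 0) : R).
    by apply: eq_big_nat => r /andP [_ Hr]; rewrite Hmod.
  by rewrite big_mkord sum_if_lt; congr (_ *+ _); apply/minn_idPl.
Qed.

Unset Implicit Arguments.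

Theorem theorem1 (R : realType) :
  (forall (n m k : nat), (0 < n)%N -> (0 < m)%N -> (0 < k)%N ->
     (k < m)%N -> (m <= k * n)%N ->
     forall u : instance_utils R n m, normalized u ->
       OPT_USW u / OPT_card_USW k u <= poc_bound R m k)
  /\
  (forall (m k c : nat), (0 < k)%N -> (2 <= c)%N -> m = (k * (c ^ 2 - 1) + 1)%N ->
     exists n : nat, (0 < n)%N /\ (m <= k * n)%N /\
       exists u : instance_utils R n m, normalized u /\
         OPT_USW u / OPT_card_USW k u = poc_bound R m k).
Proof.
split.
  by move=> n m k Hn Hm Hk Hkm Hmkn u Hu; apply: part1.
move=> m k c Hk Hc Hm.
have Hct : c = c.-1.+1 by rewrite prednK // (leq_trans _ Hc).
set t := c.-1 in Hct.
have Ht : (0 < t)%N by move: Hc; rewrite Hct.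
have Hm' : m = (t * (k * t.+2)).+1.
  by rewrite Hm Hct -mulnn; nia.
clear Hm; subst m.
have [n [Hn [Hmn [u [Hu [HO HC]]]]]] := @part2_inst R k t Hk Ht.
exists n; split; first exact: Hn.
split; first exact: Hmn.
exists u; split; first exact: Hu.
rewrite HO HC /poc_bound.
have Hk0 : k%:R != 0 :> R by rewrite pnatr_eq0 -lt0n.
have Hq : 1 + ((t * (k * t.+2)).+1%:R - 1) / k%:R = (t.+1%:R : R) ^+ 2.
  rewrite -natr1 addrK !natrM; field.
  by rewrite Hk0.
rewrite Hq sqrtr_sqr ger0_norm ?ler0n //.
have Ht2 : t.+2%:R != 0 :> R by rewrite pnatr_eq0.
field.
by rewrite -!natrD !pnatr_eq0.
Qed.
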